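(* Consider $n$ agents with responsibilities $(b_1,\ldots,b_n)$ and $m$ chores $e_1,\ldots,e_m$. Let $A=(A_1,\ldots,A_n)$ be any allocation, and let $\pi$ be the associated picking sequence in which agent $i$ picks exactly in those rounds $r$ with $e_{m-r+1}\in A_i$. Let $\rho_i(A)$ be the supremum of $c_i(A_i)/APS_i$ over all additive disvaluations $c_i$ with $c_i(e_j)\ge c_i(e_k)$ for all $j<k$. Let $\rho_i(\pi)$ be the supremum, over all additive disvaluations $c_i$ and all disvaluations and picking strategies of the other agents, of $c_i(B_i)/APS_i$, where $B_i$ is the bundle received by agent $i$ following the greedy picking strategy in $\pi$. Then $\rho_i(A)=\rho_i(\pi)$. The same equality holds with $APS_i$ replaced by $CS_i$, and, when all responsibilities equal $1/n$, with $APS_i$ replaced by $MMS_i$.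
   Context: Picking sequence: in round $r$ agent $\pi_r$ takes one remaining chore. Greedy: take remaining chore of smallest own disvalue. $APS_i=\max_p\min\{c_i(S):\sum_{e\in S}p_e\ge b_i\}$ over nonnegative price vectors summing to $1$. $CS_i=\max\{b_ic_i(\mathcal M),d_1,d_k+d_{k+1}\}$, $k=\lfloor 1/b_i\rfloor$, $d_1\ge d_2\ge\cdots$ the disvalues under $c_i$ sorted non-increasingly (padded with zeros). $MMS_i=\min_{(A_1,\ldots,A_n)}\max_jc_i(A_j)$ over partitions of the chores into $n$ bundles. *)

(* Defs.v *)
From HB Require Import structures.
From mathcomp Require Import all_boot all_order all_algebra.
From mathcomp Require Import all_classical all_reals.
From mathcomp Require Import ereal.
Set Implicit Arguments. Unset Strict Implicit. Unset Printing Implicit Defensive.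
Import Order.TTheory GRing.Theory Num.Theory.
Local Open Scope classical_set_scope.
Local Open Scope ring_scope.

(* Agents are 'I_n, chores are 'I_m; chore index j : 'I_m stands for e_{j+1}.
   A disvaluation c : 'I_m -> R is additive: c(S) = \sum_(j in S) c j. *)

Section Fair.
Variable R : realType.

Definition cost m (c : 'I_m -> R) (S : {set 'I_m}) : R := \sum_(j in S) c j.

Definition disval m (c : 'I_m -> R) : Prop := forall j, 0 <= c j.

Definition APS n m (b : 'I_n -> R) (i : 'I_n) (c : 'I_m -> R) : R :=
  sup [set inf [set cost c S | S in [set S : {set 'I_m} | b i <= \sum_(j in S) p j]]
      | p in [set p : 'I_m -> R | (forall j, 0 <= p j) /\ \sum_j p j = 1]].

(* d_1 >= d_2 >= ... : disvalues sorted non-increasingly, padded with zeros;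
   d t (t >= 1) is d_t. *)
Definition dsorted m (c : 'I_m -> R) : seq R :=
  sort (fun x y : R => y <= x) [seq c j | j <- enum 'I_m].
Definition dval m (c : 'I_m -> R) (t : nat) : R := nth 0 (dsorted c) t.-1.

Definition CS n m (b : 'I_n -> R) (i : 'I_n) (c : 'I_m -> R) : R :=
  let k := Num.truncn (b i)^-1 in
  Num.max (b i * \sum_j c j) (Num.max (dval c 1) (dval c k + dval c k.+1)).

(* Maximin share: min over partitions (A_1..A_n) of the chores into n bundles
   (a partition = an assignment f of chores to bundle indices) of max_j c(A_j). *)
Definition MMS n m (c : 'I_m -> R) : R :=
  inf [set \big[Num.max/0]_(k < n) cost c [set j | f j == k]
      | f in [set: {ffun 'I_m -> 'I_n}]].

(* An allocation A assigns each chore to exactly one agent; A_i = bundle A i. *)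
Definition bundle n m (A : 'I_m -> 'I_n) (i : 'I_n) : {set 'I_m} :=
  [set j | A j == i].

Definition pick_seq n m (A : 'I_m -> 'I_n) : seq 'I_n :=
  [seq A j | j <- rev (enum 'I_m)].

(* A (deterministic) picking strategy maps the history of chores picked so
   far (in order) to the chore to pick. [run] plays the picking sequence. *)
Definition run n m (pi : seq 'I_n) (sigma : 'I_n -> seq 'I_m -> 'I_m) : seq 'I_m :=
  seq.foldl (fun h k => rcons h (sigma k h)) [::] pi.

(* the run is legal: every pick is a remaining chore *)
Definition legal n m (pi : seq 'I_n) (sigma : 'I_n -> seq 'I_m -> 'I_m) : Prop :=
  uniq (run pi sigma).

Definition received n m (pi : seq 'I_n) (sigma : 'I_n -> seq 'I_m -> 'I_m)
  (i : 'I_n) : {set 'I_m} :=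
  finset (fun x : 'I_m =>
    x \in map snd (seq.filter (fun p : 'I_n * 'I_m => p.1 == i) (zip pi (run pi sigma)))).

Definition greedy m (c : 'I_m -> R) (s : seq 'I_m -> 'I_m) : Prop :=
  forall h : seq 'I_m, (exists y, y \notin h) ->
    s h \notin h /\ forall y, y \notin h -> c (s h) <= c y.

Definition rhoA n m (share : ('I_m -> R) -> R) (A : 'I_m -> 'I_n) (i : 'I_n)
  : \bar R :=
  ereal_sup [set ((cost c (bundle A i) / share c)%:E)
            | c in [set c : 'I_m -> R | disval c /\ 0 < share c /\
                     (forall j k : 'I_m, (j < k)%N -> c k <= c j)]].

Definition rhoPi n m (share : ('I_m -> R) -> R) (pi : seq 'I_n) (i : 'I_n)
  : \bar R :=
  ereal_sup [set x | exists (c : 'I_m -> R) (cs : 'I_n -> 'I_m -> R)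
                            (sigma : 'I_n -> seq 'I_m -> 'I_m),
     [/\ disval c /\ 0 < share c, cs i = c /\ (forall k, disval (cs k)),
         greedy c (sigma i), legal pi sigma &
         x = (cost c (received pi sigma i) / share c)%:E]].

End Fair.

(* Main.v *)
Require Import Defs.
From HB Require Import structures.
From mathcomp Require Import all_boot all_order all_algebra.
From mathcomp Require Import all_classical all_reals.
From mathcomp Require Import ereal.
From mathcomp Require Import fingroup perm zify.
Set Implicit Arguments. Unset Strict Implicit. Unset Printing Implicit Defensive.
Import Order.TTheory GRing.Theory Num.Theory.
Local Open Scope ring_scope.
Section Run.
Variables (n m : nat) (sigma : 'I_n -> seq 'I_m -> 'I_m).
Let F := (fun h k => rcons h (sigma k h)).

Lemma foldl_size (pi : seq 'I_n) h0 : size (foldl F h0 pi) = (size h0 + size pi)%N.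
Proof.
elim: pi h0 => [|k pi IH] h0 /=; first by rewrite addn0.
by rewrite IH size_rcons addSnnS.
Qed.

Lemma foldl_take (pi : seq 'I_n) h0 : take (size h0) (foldl F h0 pi) = h0.
Proof.
elim: pi h0 => [|k pi IH] h0 /=; first by rewrite take_size.
have := IH (rcons h0 (sigma k h0)); rewrite size_rcons => H.
by rewrite -(@take_takel _ (size h0) (size h0).+1) // H -cats1 take_size_cat.
Qed.

Lemma foldl_nth (pi : seq 'I_n) h0 r x0 i0 : (r < size pi)%N ->
  nth x0 (foldl F h0 pi) (size h0 + r) =
  sigma (nth i0 pi r) (take (size h0 + r) (foldl F h0 pi)).
Proof.
elim: pi h0 r => [|k pi IH] h0 [|r] //= Hr.
- have := foldl_take pi (rcons h0 (sigma k h0)); rewrite size_rcons => H.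
  have H2 : take (size h0) (foldl F (rcons h0 (sigma k h0)) pi) = h0.
    by rewrite -(@take_takel _ (size h0) (size h0).+1) // H -cats1 take_size_cat.
  rewrite addn0 H2.
  by rewrite -(@nth_take (size h0).+1) // H nth_rcons ltnn eqxx.
- by have := IH (rcons h0 (sigma k h0)) r Hr; rewrite size_rcons addSnnS.
Qed.

Lemma run_size (pi : seq 'I_n) : size (run pi sigma) = size pi.
Proof. by rewrite /run -/F foldl_size. Qed.

Lemma run_nth (pi : seq 'I_n) r x0 i0 : (r < size pi)%N ->
  nth x0 (run pi sigma) r = sigma (nth i0 pi r) (take r (run pi sigma)).
Proof. move=> Hr; rewrite /run -/F. exact: (foldl_nth [::] x0 i0 Hr). Qed.
End Run.

Section Sort.
Variable R : realType.

Lemma sort_perm m (c : 'I_m -> R) (Hm0 : (0 < m)%N) :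
  exists s : {perm 'I_m}, forall j k : 'I_m, (j <= k)%N -> c (s k) <= c (s j).
Proof.
pose ord0 := Ordinal Hm0.
pose leT := fun x y : 'I_m => c y <= c x.
pose l := sort leT (enum 'I_m).
have Hsz : size l = m by rewrite size_sort size_enum_ord.
have Hu : uniq l by rewrite sort_uniq enum_uniq.
pose f := fun j : 'I_m => nth ord0 l j.
have finj : injective f.
  move=> j k /eqP; rewrite /f nth_uniq ?Hsz // => /eqP; exact: val_inj.
exists (perm finj) => j k Hjk; rewrite !permE /f.
have Htot : total leT by move=> x y; rewrite /leT le_total.
have Htr : transitive leT by move=> x y z; rewrite /leT => H1 H2; exact: le_trans H2 H1.
have Hrf : reflexive leT by move=> x; rewrite /leT.
apply: (sorted_leq_nth Htr Hrf ord0 (sort_sorted Htot _)) => //; by rewrite inE Hsz.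
Qed.

Lemma greedy_bound m (c : 'I_m -> R) (s : {perm 'I_m})
  (Hs : forall j k : 'I_m, (j <= k)%N -> c (s k) <= c (s j))
  (g : seq 'I_m -> 'I_m) (Hg : greedy c g) (h : seq 'I_m) (k0 : 'I_m) :
  (k0 + size h).+1 = m -> c (g h) <= c (s k0).
Proof.
move=> Hk.
pose L := map s (drop k0 (enum 'I_m)).
have HL : ~~ all (mem h) L.
  apply/negP => /allP Hall.
  have := uniq_leq_size _ Hall.
  rewrite map_inj_uniq ?drop_uniq ?enum_uniq //; last exact: perm_inj.
  rewrite size_map size_drop size_enum_ord => /(_ isT).
  clear Hall; move: (nat_of_ord k0) Hk => x Hk; have E : (m - x = (size h).+1)%N by lia.
  by rewrite E ltnn.
have [y /mapP [k Hk1 ->] Hy] := allPn HL.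
have Hk0 : (k0 <= k)%N.
  have : val k \in map val (drop k0 (enum 'I_m)) by apply: map_f.
  by rewrite map_drop val_enum_ord drop_iota mem_iota => /andP [].
have [Hgh Hgmin] := Hg h (ex_intro _ (s k) Hy).
exact: le_trans (Hgmin _ Hy) (Hs _ _ Hk0).
Qed.
End Sort.

Section Sym.
Variable R : realType.
Variables (n m : nat).
Implicit Types (c p : 'I_m -> R) (s : {perm 'I_m}).

Lemma cost_perm c s (S : {set 'I_m}) :
  cost (fun j => c (s j)) S = cost c [set j | (s^-1)%g j \in S].
Proof.
rewrite /cost [RHS](reindex_inj (@perm_inj _ s)) /=.
by apply: eq_bigl => j; rewrite inE permK.
Qed.

Lemma preimK s (S : {set 'I_m}) :
  [set j | (s^-1)%g j \in [set j | s j \in S]] = S.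
Proof. by apply/setP => j; rewrite !inE permKV. Qed.

Lemma APS_perm (b : 'I_n -> R) i c s :
  APS b i (fun j => c (s j)) = APS b i c.
Proof.
rewrite /APS.
have inner : forall p, 
  [set cost (fun j => c (s j)) S | S in [set S : {set 'I_m} | b i <= \sum_(j in S) p (s j)]]%classic
  = [set cost c S | S in [set S : {set 'I_m} | b i <= \sum_(j in S) p j]]%classic.
  move=> p; apply/seteqP; split => _ [S HS <-].
  - exists [set j | (s^-1)%g j \in S]; last by rewrite cost_perm.
    by move: HS; rewrite /= -/(cost _ _) cost_perm.
  - exists [set j | s j \in S]; last by rewrite cost_perm preimK.
    by rewrite /= -/(cost _ _) cost_perm preimK.
congr sup; apply/seteqP; split => _ [p [Hp0 Hp1] <-].
- exists (fun j => p ((s^-1)%g j)).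
    split => // ; rewrite -Hp1 (reindex_inj (@perm_inj _ s)) /=.
    by apply: eq_bigr => j _; rewrite permK.
  rewrite -inner; congr inf; congr image; apply/seteqP.
  have E : forall S : {set 'I_m}, \sum_(j in S) p ((s^-1)%g (s j)) = \sum_(j in S) p j.
    by move=> S; apply: eq_bigr => j _; rewrite permK.
  by split => S /=; rewrite E.
- exists (fun j => p (s j)).
    split => //; rewrite -Hp1 [RHS](reindex_inj (@perm_inj _ s)) //=.
  congr inf; exact: inner.
Qed.

Lemma sum_perm c s : \sum_j c (s j) = \sum_j c j.
Proof. by rewrite [RHS](reindex_inj (@perm_inj _ s)). Qed.

Lemma dsorted_perm c s : dsorted (fun j => c (s j)) = dsorted c.
Proof.
rewrite /dsorted; apply/perm_sortP.
- by move=> x y; apply: le_total.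
- by move=> x y z H1 H2; exact: le_trans H2 H1.
- by move=> x y /andP [H1 H2]; apply/le_anti/andP; split.
rewrite (map_comp c s) perm_map // uniq_perm ?enum_uniq //.
  by rewrite map_inj_uniq ?enum_uniq //; exact: perm_inj.
move=> x; rewrite mem_enum; apply/mapP; exists ((s^-1)%g x); first by rewrite mem_enum.
by rewrite permKV.
Qed.

Lemma CS_perm (b : 'I_n -> R) i c s : CS b i (fun j => c (s j)) = CS b i c.
Proof. by rewrite /CS sum_perm /dval dsorted_perm. Qed.

Lemma MMS_perm c s : MMS n (fun j => c (s j)) = MMS n c.
Proof.
rewrite /MMS; congr inf; apply/seteqP; split => _ [f _ <-].
- exists [ffun j => f ((s^-1)%g j)] => //; apply: eq_bigr => k _.
  rewrite cost_perm; congr cost; apply/setP => j; by rewrite !inE ffunE.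
- exists [ffun j => f (s j)] => //; apply: eq_bigr => k _.
  rewrite cost_perm; congr cost; apply/setP => j; by rewrite !inE ffunE permKV.
Qed.
End Sym.

Section Zero.
Variable R : realType.
Variable n : nat.

Lemma APS0 (b : 'I_n -> R) i (c : 'I_0 -> R) : APS b i c = 0.
Proof.
rewrite /APS; rewrite -[RHS](@sup0 R); congr sup; apply/seteqP; split => // x.
by move=> [p [_ Hp] _]; move: Hp; rewrite big_ord0 => /eqP; rewrite eq_sym oner_eq0.
Qed.

Lemma CS0 (b : 'I_n -> R) i (c : 'I_0 -> R) : CS b i c = 0.
Proof.
rewrite /CS big_ord0 mulr0 /dval /dsorted.
have -> : enum 'I_0 = [::] by apply: size0nil; rewrite size_enum_ord.
have Hs : forall leT : rel R, sort leT [::] = [::] by [].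
by rewrite /= Hs !nth_nil addr0 !maxxx.
Qed.

Lemma MMS0 (i : 'I_n) (c : 'I_0 -> R) : MMS n c = 0.
Proof.
rewrite /MMS -[RHS](@inf1 R); congr inf; apply/seteqP; split => x.
- move=> [f _ <-] /=; apply: (big_ind (fun x : R => x = 0)) => //.
  + by move=> u v -> ->; rewrite maxxx.
  + by move=> k _; rewrite /cost big1 // => -[].
- move=> /= ->; exists [ffun=> i] => //; apply: (big_ind (fun x : R => x = 0)) => //.
  + by move=> u v -> ->; rewrite maxxx.
  + by move=> k _; rewrite /cost big1 // => -[].
Qed.
End Zero.
Section Main.
Variable R : realType.
Variables (n m : nat) (share : ('I_m -> R) -> R).
Hypothesis Hsym : forall c (s : {perm 'I_m}), share (fun j => c (s j)) = share c.
Hypothesis Hm : forall c, 0 < share c -> (0 < m)%N.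
Variables (A : 'I_m -> 'I_n) (i : 'I_n).

Lemma nth_rev_enum x0 (r : 'I_m) : nth x0 (rev (enum 'I_m)) r = rev_ord r.
Proof.
apply: val_inj; rewrite nth_rev ?size_enum_ord //= nth_enum_ord //.
exact: rev_ord_proof.
Qed.

Lemma nth_pick (r : 'I_m) : nth i (pick_seq A) r = A (rev_ord r).
Proof.
by rewrite /pick_seq (nth_map r) ?size_rev ?size_enum_ord // nth_rev_enum.
Qed.

Lemma size_pick : size (pick_seq A) = m.
Proof. by rewrite /pick_seq size_map size_rev size_enum_ord. Qed.

Lemma mem_take_idx r (j : 'I_m) : (r <= m)%N ->
  (j \in take r (rev (enum 'I_m))) = (m - r <= j)%N.
Proof.
move=> Hr; rewrite -(mem_map val_inj) map_take map_rev val_enum_ord take_rev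
  size_iota mem_rev drop_iota mem_iota add0n subKn // subnK // ltn_ord andbT.
by [].
Qed.

Lemma le_A_Pi : (rhoA share A i <= rhoPi share (pick_seq A) i)%E.
Proof.
apply: ereal_sup_le => _ [c [Hc [Hsh Hmono]] <-].
have Hm0 := Hm Hsh; pose x0 := Ordinal Hm0.
pose g := fun h : seq 'I_m => if [pick j | j \notin h] is Some j0
  then [arg max_(j > j0 | j \notin h) val j] else x0.
pose sigma := fun (_ : 'I_n) => g.
pose idx := rev (enum 'I_m).
have Hgr : greedy c g.
  move=> h [y Hy]; rewrite /g; case: pickP => [j0 Hj0 | H]; last by have := H y; rewrite Hy.
  case: arg_maxnP => // j Hj Hmax; split => // z Hz.
  have := Hmax z Hz; rewrite /= leq_eqVlt => /orP [/eqP E | Hlt].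
  + by rewrite (val_inj E).
  + exact: Hmono.
have Hstep : forall r (Hr : (r < m)%N), g (take r idx) = rev_ord (Ordinal Hr).
  move=> r Hr; set ks := rev_ord _.
  have Hks : ks \notin take r idx by rewrite mem_take_idx ?(ltnW Hr) //= -ltnNge; lia.
  rewrite /g; case: pickP => [j0 Hj0 | H]; last by have := H ks; rewrite Hks.
  case: arg_maxnP => // j Hj Hmax; apply: val_inj => /=.
  have := Hmax ks Hks; move: Hj; rewrite mem_take_idx ?(ltnW Hr) //= -ltnNge.
  move: (nat_of_ord j) => x; lia.
have Hsz : size (run (pick_seq A) sigma) = m by rewrite run_size size_pick.
have Htake : forall r, (r <= m)%N -> take r (run (pick_seq A) sigma) = take r idx.
  elim=> [|r IH] Hr; first by rewrite !take0.
  rewrite (take_nth x0) ?Hsz // (take_nth x0 (s := idx)) ?size_rev ?size_enum_ord //.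
  rewrite IH ?(ltnW Hr) //; congr rcons.
  rewrite (run_nth _ _ i) ?size_pick // IH ?(ltnW Hr) // /sigma (Hstep r Hr).
  by rewrite -[r]/(nat_of_ord (Ordinal Hr)) nth_rev_enum.
have Hrun : run (pick_seq A) sigma = idx.
  by have := Htake m (leqnn m); rewrite !take_oversize ?Hsz ?size_rev ?size_enum_ord.
have Hrec : received (pick_seq A) sigma i = bundle A i.
  apply/setP => x; rewrite !inE Hrun /pick_seq -/idx.
  have -> : forall l : seq 'I_m, zip (map A l) l = map (fun j => (A j, j)) l.
    by elim=> //= a l ->.
  apply/mapP/idP => [[[a y]]|Hx].
  + by rewrite mem_filter /= => /andP [/eqP <- /mapP [z _ [-> ->]]] ->.
  + exists (A x, x) => //; rewrite mem_filter /= Hx; apply: map_f.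
    by rewrite mem_rev mem_enum.
exists c, (fun _ => c), sigma; split => //.
- by rewrite /legal Hrun rev_uniq enum_uniq.
- by rewrite Hrec.
Qed.

Lemma le_Pi_A : (rhoPi share (pick_seq A) i <= rhoA share A i)%E.
Proof.
apply: ge_ereal_sup => _ [c [cs [sigma [[Hc Hsh] [Hcs Hcsd] Hg Hleg ->]]]].
have Hm0 := Hm Hsh; pose x0 := Ordinal Hm0.
have [s Hs] := sort_perm c Hm0.
apply: (@le_trans _ _ ((cost (fun j => c (s j)) (bundle A i) / share (fun j => c (s j)))%:E)); last first.
  apply: ereal_sup_ubound; exists (fun j => c (s j)) => //; split; first by move=> j; apply: Hc.
  by rewrite Hsym; split => // j k Hjk; apply: Hs; exact: ltnW.
rewrite Hsym lee_fin ler_pM2r ?invr_gt0 //.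
set pi := pick_seq A; set h := run pi sigma.
have Hsz : size h = m by rewrite run_size size_pick.
have Hu : uniq h by [].
pose L := map snd (seq.filter (fun p : 'I_n * 'I_m => p.1 == i) (zip pi h)).
have HuL : uniq L.
  apply: (subseq_uniq _ Hu); rewrite -[X in subseq _ X](@unzip2_zip _ _ pi h);
    last by rewrite Hsz size_pick.
  exact/map_subseq/filter_subseq.
have E : \sum_(j in received pi sigma i) c j = \sum_(x <- L) c x.
  by rewrite big_uniq //; apply: eq_bigl => x; rewrite /received inE.
rewrite /cost E.
have Hpi : [seq nth i pi r | r <- iota 0 m] = pi.
  by rewrite map_nth_iota0 ?size_pick // take_oversize // size_pick.
have Hh : [seq nth x0 h r | r <- iota 0 m] = h.
  by rewrite map_nth_iota0 ?Hsz // take_oversize // Hsz.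
rewrite /L big_map big_filter -Hpi -Hh zip_map big_map /=.
have -> : iota 0 m = index_iota 0 m by rewrite /index_iota subn0.
rewrite big_mkord [X in _ <= X](reindex_inj rev_ord_inj) /=.
rewrite (eq_bigl (fun r : 'I_m => rev_ord r \in bundle A i)); last first.
  by move=> r; rewrite /bundle inE nth_pick.
apply: ler_sum => r; rewrite /bundle inE => /eqP HA.
rewrite (run_nth _ _ i) ?size_pick // nth_pick HA.
apply: (greedy_bound Hs (Hg)).
rewrite size_take Hsz ltn_ord /=.
by move: (ltn_ord r); move: (nat_of_ord r) => x; lia.
Qed.

Lemma main : rhoA share A i = rhoPi share (pick_seq A) i.
Proof. by apply/le_anti/andP; split; [exact: le_A_Pi | exact: le_Pi_A]. Qed.
End Main.

Unset Implicit Arguments.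
Set Strict Implicit.
Theorem corollary3 (R : realType) (n m : nat) (b : 'I_n -> R)
  (A : 'I_m -> 'I_n) (i : 'I_n) :
  (forall k, 0 < b k) -> \sum_k b k = 1 ->
  [/\ rhoA (@APS R n m b i) A i = rhoPi (@APS R n m b i) (pick_seq A) i,
      rhoA (@CS R n m b i) A i = rhoPi (@CS R n m b i) (pick_seq A) i &
      ((forall k, b k = n%:R^-1) ->
       rhoA (@MMS R n m) A i = rhoPi (@MMS R n m) (pick_seq A) i)].
Proof.
move=> _ _.
have [Ha Hc Hm] : [/\ forall c : 'I_m -> R, 0 < APS b i c -> (0 < m)%N,
    forall c : 'I_m -> R, 0 < CS b i c -> (0 < m)%N &
    forall c : 'I_m -> R, 0 < MMS n c -> (0 < m)%N].
  case: m A => [|m'] A; last by [].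
  split => c; [by rewrite APS0 ltxx | by rewrite CS0 ltxx | by rewrite (MMS0 i) ltxx].
split.
- apply: main => //; exact: APS_perm.
- apply: main => //; exact: CS_perm.
- move=> _; apply: main => //; exact: MMS_perm.
Qed.
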